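(* Let $\psi\in C^2(\mathbb R;\mathbb R_+)$ with $\lim_{r\to\infty}\psi(r)=\infty$, $0<\psi'\le1$ and $\psi''\le0$. Fix $y\in\mathbb R^d$ and set $V_y(x):=\psi(\log(1+|x-y|^2))$. Then for all $t\ge0$ and $x\in\mathbb R^d$, $$\mathscr L_tV_y(x)\le 2\left(\frac{|a_t(x)|+\langle x-y,b_t(x)\rangle^++g^\nu_t(x)}{1+|x-y|^2}+2H^\nu_t(x,y)\right),$$ where $H^\nu_t(x,y):=\int_{B_\ell^c}\log\big(1+\frac{|z|}{1+|x-y|}\big)\nu_{t,x}(dz)$.
   Context: Fix $d\ge1$, $\ell\in(0,1/\sqrt2]$, $B_\ell=\{|z|<\ell\}$. $a:\mathbb R_+\times\mathbb R^d\to$ symmetric nonnegative definite matrices and $b:\mathbb R_+\times\mathbb R^d\to\mathbb R^d$ measurable; $\{\nu_{t,x}\}$ Lévy measures with $g^\nu_t(x):=\int_{B_\ell}|z|^2\nu_{t,x}(dz)<\infty$, $\nu_{t,x}(B_\ell^c)<\infty$. $\mathscr L_tf(x):=\mathrm{tr}(a_t(x)\nabla^2f(x))+b_t(x)\cdot\nabla f(x)+\int(f(x+z)-f(x)-\mathbf 1_{|z|\le\ell}z\cdot\nabla f(x))\nu_{t,x}(dz)$; $r^+:=\max(r,0)$. *)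

(* Defs.v *)
From HB Require Import structures.
From mathcomp Require Import all_boot all_order all_algebra.
From mathcomp Require Import all_classical all_reals all_analysis.
Set Implicit Arguments. Unset Strict Implicit. Unset Printing Implicit Defensive.
Import Order.TTheory GRing.Theory Num.Theory.
Import numFieldNormedType.Exports.
Local Open Scope classical_set_scope.
Local Open Scope ring_scope.

(* R^d is represented by row vectors 'rV[R]_d.  As a measurable space we
   equip it with its Borel sigma-algebra (generated by the open sets). *)
Definition Rd (R : realType) (d : nat) : Type :=
  g_sigma_algebraType (@open 'rV[R]_d).

Definition enorm (R : realType) (d : nat) (x : 'rV[R]_d) : R :=
  Num.sqrt (\sum_(i < d) x 0 i ^+ 2).
Definition dotp (R : realType) (d : nat) (x y : 'rV[R]_d) : R :=
  \sum_(i < d) x 0 i * y 0 i.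

Definition ebasis (R : realType) (d : nat) (i : 'I_d) : 'rV[R]_d :=
  delta_mx 0 i.

Definition grad (R : realType) (d : nat) (f : 'rV[R]_d -> R) (x : 'rV[R]_d)
  : 'rV[R]_d := \row_i derive f x (ebasis R i).
Definition hess (R : realType) (d : nat) (f : 'rV[R]_d -> R) (x : 'rV[R]_d)
  : 'M[R]_d :=
  \matrix_(i, j) derive (fun y => derive f y (ebasis R i)) x (ebasis R j).

(* Extended-real valued (the jump integral may be +oo). *)
Definition levy_gen (R : realType) (d : nat) (ell : R) (a : 'M[R]_d)
  (b : 'rV[R]_d) (nu : {measure set (Rd R d) -> \bar R})
  (f : 'rV[R]_d -> R) (x : 'rV[R]_d) : \bar R :=
  ((\tr (a *m hess f x) + dotp b (grad f x))%:E +
   \int[nu]_(z in [set: Rd R d])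
      (f (x + z) - f x - (if enorm z <= ell then dotp z (grad f x) else 0))%:E)%E.

Definition gnu (R : realType) (d : nat) (ell : R)
  (nu : {measure set (Rd R d) -> \bar R}) : \bar R :=
  \int[nu]_(z in [set z : Rd R d | enorm z < ell]) (enorm z ^+ 2)%:E.

Definition Hnu (R : realType) (d : nat) (ell : R)
  (nu : {measure set (Rd R d) -> \bar R}) (x y : 'rV[R]_d) : \bar R :=
  \int[nu]_(z in [set z : Rd R d | ell <= enorm z])
     (ln (1 + enorm z / (1 + enorm (x - y))))%:E.

(* Main.v *)
Require Import Defs.
From HB Require Import structures.
From mathcomp Require Import all_boot all_order all_algebra.
From mathcomp Require Import all_classical all_reals all_analysis.
Import Order.TTheory GRing.Theory Num.Theory.
Import numFieldNormedType.Exports.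
Local Open Scope classical_set_scope.
Local Open Scope ring_scope.
From mathcomp Require Import ring lra.
From mathcomp Require Import measurable_realfun.

Section S.
Local Open Scope ereal_scope.
Context d (T : measurableType d) (R : realType) (mu : {measure set T -> \bar R}).
Lemma le_integral_any (D : set T) (f g : T -> \bar R) :
  (forall x, D x -> f x <= g x) ->
  \int[mu]_(x in D) f x <= \int[mu]_(x in D) g x.
Proof.
move=> fg; rewrite /integral.
have hp : forall x, ((f \_ D) ^\+) x <= ((g \_ D) ^\+) x.
  move=> x; rewrite !funeposE; case: (boolP (x \in D)) => xD.
    rewrite !patchT//; move: xD; rewrite inE => Dx.
    by rewrite ge_max !le_max lexx !orbT andbT fg.
  by rewrite !patchN.
have hn : forall x, ((g \_ D) ^\-) x <= ((f \_ D) ^\-) x.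
  move=> x; rewrite !funenegE; case: (boolP (x \in D)) => xD.
    rewrite !patchT//; move: xD; rewrite inE => Dx.
    by rewrite ge_max !le_max lexx !orbT andbT leeN2 fg.
  by rewrite !patchN.
apply: leeB.
  apply: le_ereal_sup => _ [h /= hf <-]; exists h => //= x; exact: le_trans (hf x) (hp x).
apply: le_ereal_sup => _ [h /= hf <-]; exists h => //= x; exact: le_trans (hf x) (hn x).
Qed.
End S.
Lemma cont_meas (R : realType) d (f : Rd R d -> R) :
  continuous (f : 'rV[R]_d -> R) -> measurable_fun setT f.
Proof.
move=> /continuousP cf; apply: (measurability _ (measurable_realfun.RGenOpens.measurableE R)).
move=> _ [_ [a [b ->] <-]]; rewrite setTI; apply: sub_sigma_algebra.
apply: cf; exact: interval_open.
Qed.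

Lemma sumsq_continuous (R : realType) d (s : seq 'I_d) :
  continuous (fun z : 'rV[R]_d => \sum_(i <- s) z 0 i ^+ 2).
Proof.
elim: s => [|i s IH] z.
  under eq_fun do rewrite big_nil. exact: cst_continuous.
under eq_fun do rewrite big_cons.
apply: (@continuousD _ _ _ (fun z : 'rV[R]_d => z 0 i ^+ 2) (fun z => \sum_(j <- s) z 0 j ^+ 2)) => //; last exact: IH.
apply: (@continuousM _ _ (fun z : 'rV[R]_d => z 0 i) (fun z : 'rV[R]_d => z 0 i)); exact: coord_continuous.
Qed.

Lemma enorm_continuous (R : realType) d : continuous (@enorm R d).
Proof.
move=> z; apply: continuous_comp; first exact: sumsq_continuous.
exact: sqrt_continuous.
Qed.

Lemma enorm_meas (R : realType) d : measurable_fun setT (@enorm R d : Rd R d -> R).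
Proof. apply: cont_meas; exact: enorm_continuous. Qed.
Section Q.
Variables (R : realType) (d : nat).
Definition Q (w : 'rV[R]_d) := \sum_(i < d) w 0 i ^+ 2.
Lemma Q_ge0 (w : 'rV[R]_d) : 0 <= Q w.
Proof. by apply: sumr_ge0 => i _; exact: sqr_ge0. Qed.
Lemma enorm_sq (w : 'rV[R]_d) : enorm w ^+ 2 = Q w.
Proof. by rewrite /enorm sqr_sqrtr // Q_ge0. Qed.
Lemma enorm_ge0 (w : 'rV[R]_d) : 0 <= enorm w.
Proof. exact: sqrtr_ge0. Qed.
Lemma dotpC (u z : 'rV[R]_d) : dotp u z = dotp z u.
Proof. by apply: eq_bigr => i _; rewrite mulrC. Qed.
Lemma QD (u z : 'rV[R]_d) : Q (u + z) = Q u + 2 * dotp u z + Q z.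
Proof.
rewrite /Q /dotp mulr_sumr -!big_split /=; apply: eq_bigr => i _.
rewrite mxE; ring.
Qed.
Lemma QN (u : 'rV[R]_d) : Q (- u) = Q u.
Proof. by apply: eq_bigr => i _; rewrite mxE sqrrN. Qed.
Lemma dotpN (u z : 'rV[R]_d) : dotp u (- z) = - dotp u z.
Proof. by rewrite /dotp -sumrN; apply: eq_bigr => i _; rewrite mxE mulrN. Qed.
Lemma QZ k (u : 'rV[R]_d) : Q (k *: u) = k ^+ 2 * Q u.
Proof. by rewrite /Q mulr_sumr; apply: eq_bigr => i _; rewrite mxE exprMn. Qed.
Lemma dotpZl k (u z : 'rV[R]_d) : dotp (k *: u) z = k * dotp u z.
Proof. by rewrite /dotp mulr_sumr; apply: eq_bigr => i _; rewrite mxE mulrA. Qed.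
Lemma dotpZr k (u z : 'rV[R]_d) : dotp u (k *: z) = k * dotp u z.
Proof. by rewrite dotpC dotpZl dotpC. Qed.
Lemma Q_eq0 (u : 'rV[R]_d) : Q u = 0 -> forall i, u 0 i = 0.
Proof.
move=> /eqP; rewrite psumr_eq0; last by move=> i _; exact: sqr_ge0.
by move=> /allP h i; apply/eqP; rewrite -sqrf_eq0; apply: h; rewrite mem_index_enum.
Qed.
Lemma CS (u z : 'rV[R]_d) : dotp u z <= enorm u * enorm z.
Proof.
set p := enorm u; set q := enorm z.
have p0 : 0 <= p by exact: enorm_ge0.
have q0 : 0 <= q by exact: enorm_ge0.
have [pe|pn0] := eqVneq p 0.
  have : Q u = 0 by rewrite -enorm_sq -/p pe expr0n.
  move/Q_eq0 => h; rewrite pe mul0r /dotp big1 // => i _; by rewrite h mul0r.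
have [qe|qn0] := eqVneq q 0.
  have : Q z = 0 by rewrite -enorm_sq -/q qe expr0n.
  move/Q_eq0 => h; rewrite qe mulr0 /dotp big1 // => i _; by rewrite h mulr0.
have := Q_ge0 (q *: u - p *: z).
rewrite QD QN dotpN !QZ dotpZl dotpZr -!enorm_sq -/p -/q => h.
have pq : 0 < p * q by rewrite mulr_gt0 // lt0r ?pn0 ?qn0.
nra.
Qed.
End Q.
Arguments Q {R d}.
Arguments Q_ge0 {R d}. Arguments enorm_sq {R d}. Arguments enorm_ge0 {R d}. Arguments dotpC {R d}. Arguments QD {R d}. Arguments QN {R d}. Arguments dotpN {R d}. Arguments QZ {R d}. Arguments dotpZl {R d}. Arguments dotpZr {R d}. Arguments Q_eq0 {R d}. Arguments CS {R d}.
Section Psi.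
Variables (R : realType) (psi : R -> R).
Hypothesis d1 : forall r, derivable psi r 1.
Hypothesis d2 : forall r, derivable (derive1 psi) r 1.
Hypothesis h2 : forall r, 0 <= r -> (derive1 (derive1 psi)) r <= 0.

Lemma cont_of_der (f : R -> R) : (forall r, derivable f r 1) -> continuous f.
Proof. by move=> df r; apply/differentiable_continuous/derivable1_diffP. Qed.

Lemma isd (f : R -> R) x : derivable f x 1 -> is_derive x 1 f (derive1 f x).
Proof. by move=> h; rewrite derive1E; exact: derivableP. Qed.

Lemma psi'_nincr a b : 0 <= a -> a <= b -> derive1 psi b <= derive1 psi a.
Proof.
move=> a0 ab.
apply: (@ler0_derive1_nincr _ (derive1 psi) a b) => //.
- move=> x; rewrite in_itv /= => /andP[ax _]; apply: h2; lra.
- apply: continuous_subspaceT; exact: cont_of_der.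
Qed.

Lemma psi_concave A B : 0 <= A -> 0 <= B ->
  psi B - psi A <= derive1 psi A * (B - A).
Proof.
move=> A0 B0.
have cpsi : continuous psi by exact: cont_of_der.
have [AB|BA|<-] := ltgtP A B.
- have [c] := @MVT _ psi (derive1 psi) A B AB (fun x _ => @isd psi x (d1 x)) (continuous_subspaceT cpsi).
  rewrite in_itv /= => /andP[Ac cB] ->.
  apply: ler_wpM2r; first lra.
  apply: psi'_nincr => //; lra.
- have [c] := @MVT _ psi (derive1 psi) B A BA (fun x _ => @isd psi x (d1 x)) (continuous_subspaceT cpsi).
  rewrite in_itv /= => /andP[Bc cA] e.
  have : derive1 psi A <= derive1 psi c by apply: psi'_nincr => //; lra.
  have : psi B - psi A = - (derive1 psi c * (A - B)) by rewrite -e; ring.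
  move=> ->; nra.
- by rewrite !subrr mulr0.
Qed.
End Psi.
Section R1.
Variable R : realType.
Lemma ln_ge_frac (w : R) : 0 <= w -> w / (1 + w) <= ln (1 + w).
Proof.
move=> w0.
have h := @le_ln1Dx R (- (w / (1 + w))).
have e : 1 + - (w / (1 + w)) = (1 + w)^-1 by field; lra.
rewrite e lnV in h; last by rewrite posrE; lra.
have : -1 < - (w / (1 + w)).
  rewrite ltrN2 ltr_pdivrMr; lra.
move/h; lra.
Qed.

Lemma poly4 (p q : R) : 0 <= p -> 0 <= q ->
  1 + (p + q) ^+ 2 <= (1 + p ^+ 2) * (1 + q / (1 + p)) ^+ 4.
Proof.
move=> p0 q0; set w := q / (1 + p).
have w0 : 0 <= w by rewrite /w divr_ge0 //; lra.
have qe : q = w * (1 + p) by rewrite /w divfK //; lra.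
rewrite qe.
have e : (1 + p ^+ 2) * (1 + w) ^+ 4 - (1 + (p + w * (1 + p)) ^+ 2)
   = w * (2 * p^+2 - 2 * p + 4) + w^+2 * (5 * p^+2 - 2 * p + 5) + (1 + p^+2) * (4 * w^+3 + w^+4) by ring.
rewrite -subr_ge0 e.
have h1 : 0 <= 2 * p^+2 - 2 * p + 4 by nra.
have h2 : 0 <= 5 * p^+2 - 2 * p + 5 by nra.
have h3 : 0 <= w ^+ 2 by nra.
have h4 : 0 <= 4 * w^+3 + w^+4.
  by apply: addr_ge0; [apply: mulr_ge0 => //; apply: exprn_ge0|apply: exprn_ge0].
have h5 : 0 <= 1 + p^+2 by nra.
apply: addr_ge0; [apply: addr_ge0|]; apply: mulr_ge0 => //.
Qed.

Lemma small_sphere (p q : R) : 0 <= p -> 0 <= q -> q <= 1 ->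
  q ^+ 2 / (1 + p ^+ 2) <= 4 * ln (1 + q / (1 + p)).
Proof.
move=> p0 q0 q1.
have w0 : 0 <= q / (1 + p) by rewrite divr_ge0 //; lra.
apply: le_trans (_ : 4 * ((q / (1 + p)) / (1 + q / (1 + p))) <= _); last first.
  by rewrite ler_pM2l //; apply: ln_ge_frac.
have e : (q / (1 + p)) / (1 + q / (1 + p)) = q / (1 + p + q) by field; lra.
rewrite e ler_pdivrMr; last by nra.
have e2 : 4 * (q / (1 + p + q)) * (1 + p ^+ 2) = (4 * q * (1 + p ^+ 2)) / (1 + p + q) by field; lra.
rewrite e2 ler_pdivlMr; last by lra.
have h1 : q * (1 + p + q) <= 4 * (1 + p ^+ 2) by nra.
have h2 : q * (q * (1 + p + q)) <= q * (4 * (1 + p ^+ 2)) by apply: ler_wpM2l.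
nra.
Qed.
End R1.
Section D1.
Variable R : realType.
Implicit Types f g : R -> R.
Lemma isdC (c x : R) : is_derive x 1 (fun _ : R => c) 0.
Proof. exact: is_derive_cst. Qed.
Lemma isdI (x : R) : is_derive x 1 (fun h : R => h) 1.
Proof. exact: is_derive_id. Qed.
Lemma isdD f g (x df dg : R) : is_derive x 1 f df -> is_derive x 1 g dg ->
  is_derive x 1 (fun h => f h + g h) (df + dg).
Proof. move=> a b; exact: is_deriveD. Qed.
Lemma isdM f g (x df dg : R) : is_derive x 1 f df -> is_derive x 1 g dg ->
  is_derive x 1 (fun h => f h * g h) (f x * dg + g x * df).
Proof. move=> a b; exact: is_deriveM. Qed.
Lemma isdV f (x df : R) : f x != 0 -> is_derive x 1 f df ->
  is_derive x 1 (fun h => (f h)^-1) (- (f x) ^- 2 * df).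
Proof. move=> a b; exact: is_deriveV. Qed.
Lemma isdComp f g (x df dg : R) : is_derive x 1 f df -> is_derive (f x) 1 g dg ->
  is_derive x 1 (fun h => g (f h)) (dg * df).
Proof. move=> a b; exact: is_derive1_comp. Qed.
Lemma isdE f (x df dfp : R) : is_derive x 1 f df -> df = dfp -> is_derive x 1 f dfp.
Proof. by move=> a <-. Qed.
Lemma isd_der f (x : R) : derivable f x 1 -> is_derive x 1 f (derive1 f x).
Proof. by move=> h; rewrite derive1E; exact: derivableP. Qed.
Lemma isd_val f (x df : R) : is_derive x 1 f df -> derive1 f x = df.
Proof. by move=> h; rewrite derive1E derive_val. Qed.

Lemma isd_quad (c0 c1 c2 : R) : is_derive (0:R) 1 (fun h => c0 + 2 * h * c1 + c2 * h ^+ 2) (2 * c1).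
Proof.
apply: isdE.
rewrite /GRing.scale /=.
ring.
Qed.
End D1.
Lemma derive_line (R : realType) d (f : 'rV[R]_d -> R) (a v : 'rV[R]_d) :
  derive f a v = derive1 (fun h : R => f (h *: v + a)) 0.
Proof.
rewrite /derive /derive1; congr lim; apply: congr2 => //; apply: funext => h /=.
by rewrite addr0 scale0r add0r.
Qed.
Section V.
Variables (R : realType) (d : nat) (psi : R -> R) (y : 'rV[R]_d).
Hypothesis d1 : forall r, derivable psi r 1.
Hypothesis d2 : forall r, derivable (derive1 psi) r 1.

Definition V (w : 'rV[R]_d) := psi (ln (1 + enorm (w - y) ^+ 2)).

Lemma V_line (w v : 'rV[R]_d) :
  (fun h : R => V (h *: v + w)) =
  (fun h => psi (ln (1 + (Q (w - y) + 2 * h * dotp (w - y) v + Q v * h ^+ 2)))).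
Proof.
apply: funext => h; rewrite /V enorm_sq.
have -> : h *: v + w - y = (w - y) + h *: v by rewrite [RHS]addrC addrA.
rewrite QD QZ dotpZr; congr (psi (ln (1 + _))); ring.
Qed.

Lemma isd_lnphi (phi : R -> R) (g : R -> R) (dg : R) : (forall r, derivable phi r 1) ->
  0 < g 0 -> is_derive (0:R) 1 g dg ->
  is_derive (0:R) 1 (fun h => phi (ln (g h))) (derive1 phi (ln (g 0)) * ((g 0)^-1 * dg)).
Proof.
move=> dphi g0 hg.
apply: (@isdComp _ (fun h => ln (g h)) phi).
  apply: (@isdComp _ g (@ln R) 0 dg ((g 0)^-1)) => //; exact: is_derive1_ln.
exact: isd_der.
Qed.

Lemma dotpD (u z v : 'rV[R]_d) : dotp (u + z) v = dotp u v + dotp z v.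
Proof. by rewrite /dotp -big_split; apply: eq_bigr => i _; rewrite mxE mulrDl. Qed.

Lemma isd_g (c0 c1 c2 : R) :
  is_derive (0:R) 1 (fun h : R => 1 + (c0 + 2 * h * c1 + c2 * h ^+ 2)) (2 * c1).
Proof. apply: isdE; rewrite /GRing.scale /=; ring. Qed.

Lemma derive_V (w v : 'rV[R]_d) : derive V w v =
  derive1 psi (ln (1 + Q (w - y))) * ((1 + Q (w - y))^-1 * (2 * dotp (w - y) v)).
Proof.
rewrite derive_line V_line; apply: isd_val.
have g0 : 0 < 1 + (Q (w - y) + 2 * 0 * dotp (w - y) v + Q v * 0 ^+ 2).
  rewrite !mulr0 mul0r !addr0 expr0n /= mulr0 addr0.
  by have := Q_ge0 (w - y); lra.
have := @isd_lnphi psi _ _ d1 g0 (isd_g _ _ _).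
by rewrite !mulr0 mul0r !addr0 expr0n /= mulr0 addr0.
Qed.

Lemma derive_V2 (x v1 v2 : 'rV[R]_d) :
  derive (fun w => derive V w v1) x v2 =
  let s := 1 + Q (x - y) in let L := ln s in
  derive1 (derive1 psi) L * (s^-1 * (2 * dotp (x - y) v2)) * (s^-1 * (2 * dotp (x - y) v1))
  + derive1 psi L * (s^-1 * (2 * dotp v2 v1) + 2 * dotp (x - y) v1 * (- s ^- 2 * (2 * dotp (x - y) v2))).
Proof.
have -> : (fun w => derive V w v1) = (fun w =>
  derive1 psi (ln (1 + Q (w - y))) * ((1 + Q (w - y))^-1 * (2 * dotp (w - y) v1))).
  by apply: funext => w; rewrite derive_V.
set c0 := Q (x - y); set c1 := dotp (x - y) v2; set c2 := Q v2.
set a := dotp (x - y) v1; set b := dotp v2 v1.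
pose g := fun h : R => 1 + (c0 + 2 * h * c1 + c2 * h ^+ 2).
rewrite derive_line.
transitivity (derive1 (fun h => derive1 psi (ln (g h)) * ((g h)^-1 * (2 * (a + h * b)))) 0).
  congr (derive1 _ 0); apply: funext => h.
  have e : h *: v2 + x - y = (x - y) + h *: v2 by rewrite [RHS]addrC addrA.
  rewrite /= e QD QZ dotpZr (dotpD (x - y)) dotpZl /g -/c0 -/c1 -/c2 -/a -/b.
  by congr (_ * ((1 + _)^-1 * _)); [congr (derive1 psi (ln (1 + _)))|]; ring.
apply: isd_val.
have hg := isd_g c0 c1 c2.
have g0 : 0 < g 0.
  rewrite /g !mulr0 mul0r !addr0 expr0n /= mulr0 addr0.
  by have := Q_ge0 (x - y); rewrite -/c0; lra.
have h1 := @isd_lnphi (derive1 psi) g _ d2 g0 hg.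
have h2 := @isdV R g _ _ (lt0r_neq0 g0) hg.
have h3 : is_derive (0:R) 1 (fun h : R => 2 * (a + h * b)) (2 * b).
  apply: isdE; rewrite /GRing.scale /=; ring.
have h4 := @isdM R _ _ _ _ _ h2 h3.
have h5 := @isdM R _ _ _ _ _ h1 h4.
apply: (@isdE R _ _ _ _ h5).
have ge : g 0 = 1 + c0 by rewrite /g; ring.
rewrite ge /=; ring.
Qed.
End V.

Arguments dotpD {R d}.

Section P1.
Variables (R : realType) (d : nat).

Lemma ebasisE (i k : 'I_d) : ebasis R i 0 k = (k == i)%:R.
Proof. by rewrite /ebasis mxE eqxx. Qed.

Lemma dotp_e (u : 'rV[R]_d) i : dotp u (ebasis R i) = u 0 i.
Proof.
rewrite /dotp (bigD1 i) //= ebasisE eqxx mulr1 big1 ?addr0 // => k ki.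
by rewrite ebasisE (negbTE ki) mulr0.
Qed.

Lemma dotp_ee (i j : 'I_d) : dotp (ebasis R j) (ebasis R i) = (j == i)%:R.
Proof. by rewrite dotpC dotp_e ebasisE. Qed.

Lemma quadE (A : 'M[R]_d) (u : 'rV[R]_d) :
  (u *m A *m u^T) 0 0 = \sum_i \sum_j A i j * (u 0 i * u 0 j).
Proof.
rewrite mxE; under eq_bigr do rewrite !mxE big_distrl /=.
rewrite exchange_big /=; apply: eq_bigr => i _; apply: eq_bigr => j _.
ring.
Qed.

Lemma trace_formula (A H : 'M[R]_d) (u : 'rV[R]_d) (C B : R) :
  (forall i j, H j i = C * (u 0 i * u 0 j) + B * (j == i)%:R) ->
  \tr (A *m H) = C * (\sum_i \sum_j A i j * (u 0 i * u 0 j)) + B * \tr A.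
Proof.
move=> hH; rewrite /mxtrace mulr_sumr mulr_sumr -big_split /=.
apply: eq_bigr => i _; rewrite mxE.
rewrite (eq_bigr (fun j => C * (A i j * (u 0 i * u 0 j)) + B * (A i j * (j == i)%:R))); last first.
  by move=> j _; rewrite hH; ring.
rewrite big_split /= -!mulr_sumr; congr (_ + B * _).
rewrite (bigD1 i) //= big1 ?addr0; first by rewrite eqxx mulr1.
by move=> j ji; rewrite (negbTE ji) mulr0.
Qed.

Lemma trace_ge0 (A : 'M[R]_d) : (forall v : 'rV[R]_d, 0 <= (v *m A *m v^T) 0 0) -> 0 <= \tr A.
Proof.
move=> hA; apply: sumr_ge0 => i _.
have := hA (ebasis R i); rewrite quadE.
have -> : \sum_k \sum_j A k j * (ebasis R i 0 k * ebasis R i 0 j) = A i i; last by [].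
rewrite (bigD1 i) //= [X in _ + X]big1; last first.
  move=> k ki; apply: big1 => j _; by rewrite ebasisE (negbTE ki) mul0r mulr0.
rewrite addr0 (bigD1 i) //= big1; last first.
  by move=> j ji; rewrite [ebasis R i 0 j]ebasisE (negbTE ji) !mulr0.
by rewrite !ebasisE eqxx !mulr1 !addr0.
Qed.
End P1.

Section J.
Variables (R : realType) (d : nat) (psi : R -> R).
Hypothesis d1 : forall r, derivable psi r 1.
Hypothesis d2 : forall r, derivable (derive1 psi) r 1.
Hypothesis h1 : forall r, 0 <= r -> 0 < (derive1 psi) r <= 1.
Hypothesis h2 : forall r, 0 <= r -> (derive1 (derive1 psi)) r <= 0.

Lemma jump_real (u z : 'rV[R]_d) :
  let s := 1 + Q u in let L := ln s in
  let F := psi (ln (1 + Q (u + z))) - psi L in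
  F - derive1 psi L * s^-1 * 2 * dotp u z <= Q z / s /\
  F <= 4 * ln (1 + enorm z / (1 + enorm u)).
Proof.
move=> s L F.
have Qu0 := Q_ge0 u; have Qz0 := Q_ge0 z; have Quz0 := Q_ge0 (u + z).
have s1 : 1 <= s by rewrite /s; lra.
have s0 : 0 < s by lra.
set s' := 1 + Q (u + z).
have s'1 : 1 <= s' by rewrite /s'; lra.
have L0 : 0 <= L by apply: ln_ge0.
have L'0 : 0 <= ln s' by apply: ln_ge0.
have [dp0 dp1] := andP (h1 _ L0).
have conc : F <= derive1 psi L * (ln s' - L) by exact: (@psi_concave R psi d1 d2 h2 L (ln s') L0 L'0).
have lnD : ln s' - L = ln (s' / s).
  by rewrite ln_div // posrE; lra.
split.
  have hl : ln (s' / s) <= s' / s - 1.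
    have := @le_ln1Dx R (s' / s - 1).
    rewrite [1 + _]addrC subrK; apply.
    have : 0 < s' / s by apply: divr_gt0; lra.
    lra.
  have e : s' / s - 1 = (2 * dotp u z + Q z) / s.
    by rewrite /s' /s QD; field; lra.
  rewrite lnD in conc; rewrite e in hl.
  have : derive1 psi L * (ln (s' / s)) <= derive1 psi L * ((2 * dotp u z + Q z) / s).
    by apply: ler_wpM2l => //; lra.
  have : derive1 psi L * (Q z / s) <= Q z / s.
    by rewrite ler_piMl // divr_ge0 //; lra.
  have : derive1 psi L * ((2 * dotp u z + Q z) / s) =
    derive1 psi L * s^-1 * 2 * dotp u z + derive1 psi L * (Q z / s).
    by field; lra.
  lra.
set p := enorm u; set q := enorm z.
have p0 : 0 <= p by apply: enorm_ge0.
have q0 : 0 <= q by apply: enorm_ge0.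
have w0 : 0 <= q / (1 + p) by rewrite divr_ge0 //; lra.
have Qup : Q u = p ^+ 2 by rewrite /p enorm_sq.
have Qzq : Q z = q ^+ 2 by rewrite /q enorm_sq.
have cs := CS u z; rewrite -/p -/q in cs.
have hs' : s' <= s * (1 + q / (1 + p)) ^+ 4.
  rewrite /s' /s QD Qup Qzq.
  have := @poly4 R p q p0 q0.
  nra.
have lnw : 0 <= ln (1 + q / (1 + p)) by apply: ln_ge0; lra.
have hl : ln s' - L <= 4 * ln (1 + q / (1 + p)).
  have X0 : 0 < (1 + q / (1 + p)) ^+ 4 by apply: exprn_gt0; lra.
  have : ln s' <= ln (s * (1 + q / (1 + p)) ^+ 4).
    by rewrite ler_ln // posrE; [lra|apply: mulr_gt0].
  rewrite lnM ?posrE // lnXn; last by lra.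
  rewrite /L; move=> h; rewrite -mulr_natl in h; lra.
have : derive1 psi L * (ln s' - L) <= derive1 psi L * (4 * ln (1 + q / (1 + p))).
  by apply: ler_wpM2l => //; lra.
have : derive1 psi L * (4 * ln (1 + q / (1 + p))) <= 4 * ln (1 + q / (1 + p)).
  by rewrite ler_piMl //; apply: mulr_ge0 => //.
lra.
Qed.
End J.

Section I.
Variables (R : realType) (d : nat).

Lemma mA (ell : R) : measurable [set z : Rd R d | (enorm z < ell)%R].
Proof.
have := @enorm_meas R d measurableT _ (measurable_itv `]-oo, ell[).
rewrite setTI; congr measurable; apply/seteqP; split => z /=; by rewrite in_itv.
Qed.

Lemma mB (ell : R) : measurable [set z : Rd R d | (ell <= enorm z)%R].
Proof.
have := @enorm_meas R d measurableT _ (measurable_itv `[ell, +oo[).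
rewrite setTI; congr measurable; apply/seteqP; split => z /=; by rewrite in_itv /= andbT.
Qed.

Lemma f1_cont (c : R) : continuous (fun z : 'rV[R]_d => c * enorm z ^+ 2)%R.
Proof.
move=> z; apply: (@continuousM _ _ (fun=> c) (fun z : 'rV[R]_d => enorm z ^+ 2)); first exact: cst_continuous.
apply: (@continuousM _ _ (@enorm R d) (@enorm R d)); exact: enorm_continuous.
Qed.

Lemma f1_meas (c : R) : measurable_fun setT (fun z : Rd R d => c * enorm z ^+ 2)%R.
Proof. apply: cont_meas; exact: f1_cont. Qed.

Lemma f2_cont (p : R) : (0 <= p)%R ->
  continuous (fun z : 'rV[R]_d => 4 * ln (1 + enorm z / (1 + p)))%R.
Proof.
move=> p0 z; apply: (@continuousM _ _ (fun=> 4%R) (fun z : 'rV[R]_d => ln (1 + enorm z / (1 + p)))%R); first exact: cst_continuous.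
apply: (@continuous_comp _ _ _ (fun z : 'rV[R]_d => 1 + enorm z / (1 + p))%R (@ln R)); last first.
  apply: continuous_ln.
  have : (0 <= enorm z / (1 + p))%R by rewrite divr_ge0 ?enorm_ge0 //; lra.
  lra.
apply: (@continuous_comp _ _ _ (@enorm R d) (fun r : R => 1 + r / (1 + p))%R).
  exact: enorm_continuous.
apply: cont_of_der => r; apply: ex_derive.
Qed.

Lemma f2_meas (p : R) : (0 <= p)%R ->
  measurable_fun setT (fun z : Rd R d => 4 * ln (1 + enorm z / (1 + p)))%R.
Proof. move=> p0; apply: cont_meas; exact: f2_cont. Qed.

Local Open Scope ereal_scope.
Lemma jump_integral (mu : {measure set (Rd R d) -> \bar R}) (ell s p : R) (F : Rd R d -> R) :
  (0 < s)%R -> (0 <= p)%R ->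
  (forall z : Rd R d, F z <= \1_[set z : Rd R d | (enorm z < ell)%R] z * (2 / s * enorm z ^+ 2)
     + \1_[set z : Rd R d | (ell <= enorm z)%R] z * (4 * ln (1 + enorm z / (1 + p))))%R ->
  \int[mu]_(z in [set: Rd R d]) (F z)%:E <= (2 / s)%:E * gnu ell mu +
     4%:E * \int[mu]_(z in [set z : Rd R d | (ell <= enorm z)%R]) (ln (1 + enorm z / (1 + p)))%:E.
Proof.
move=> s0 p0 hF.
set A := [set z : Rd R d | (enorm z < ell)%R].
set B := [set z : Rd R d | (ell <= enorm z)%R].
pose f1 := fun z : Rd R d => (2 / s * enorm z ^+ 2)%R.
pose f2 := fun z : Rd R d => (4 * ln (1 + enorm z / (1 + p)))%R.
have f10 z : (0 <= f1 z)%R by rewrite /f1 mulr_ge0 ?sqr_ge0 // divr_ge0 //; lra.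
have f20 z : (0 <= f2 z)%R.
  rewrite /f2 mulr_ge0 // ln_ge0 //.
  have : (0 <= enorm z / (1 + p))%R by rewrite divr_ge0 ?enorm_ge0 //; lra.
  lra.
apply: le_trans (@le_integral_any _ _ _ mu setT _ (fun z => (\1_A z * f1 z)%:E + (\1_B z * f2 z)%:E) _) _.
  by move=> z _; rewrite -EFinD lee_fin; exact: hF.
have i0 (C : set (Rd R d)) z : (0 <= \1_C z)%R by rewrite indicE.
rewrite ge0_integralD //; first last.
- apply/measurable_EFinP; apply: measurable_funM; first exact: measurable_indic (mB ell).
  exact: f2_meas.
- by move=> z _; rewrite lee_fin mulr_ge0.
- apply/measurable_EFinP; apply: measurable_funM; first exact: measurable_indic (mA ell).
  exact: f1_meas.
- by move=> z _; rewrite lee_fin mulr_ge0.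
have pe (C : set (Rd R d)) (f : Rd R d -> R) :
    \int[mu]_(z in [set: Rd R d]) (\1_C z * f z)%:E = \int[mu]_(z in C) (f z)%:E.
  rewrite (integral_mkcond C); apply: eq_integral => z _.
  rewrite /patch indicE; case: (z \in C); by rewrite ?mul1r ?mul0r.
rewrite !pe.
apply: leeD.
  rewrite /gnu /f1 -/A.
  under eq_integral do rewrite EFinM.
  rewrite ge0_integralZl_EFin //; last by rewrite divr_ge0 //; lra.
  - exact: mA.
  - by move=> z _; rewrite lee_fin sqr_ge0.
  - apply/measurable_EFinP; apply: measurable_funTS; have := f1_meas 1%R.
    by apply: eq_measurable_fun => z _; rewrite mul1r.
rewrite /f2.
under eq_integral do rewrite EFinM.
rewrite ge0_integralZl_EFin //.
- exact: mB.
- move=> z _; rewrite lee_fin ln_ge0 //.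
  have : (0 <= enorm z / (1 + p))%R by rewrite divr_ge0 ?enorm_ge0 //; lra.
  lra.
- apply/measurable_EFinP; apply: measurable_funTS; apply: cont_meas => z.
  apply: (@continuous_comp _ _ _ (fun z : 'rV[R]_d => 1 + enorm z / (1 + p))%R (@ln R)); last first.
    apply: continuous_ln.
    have : (0 <= enorm z / (1 + p))%R by rewrite divr_ge0 ?enorm_ge0 //; lra.
    lra.
  apply: (@continuous_comp _ _ _ (@enorm R d) (fun r : R => 1 + r / (1 + p))%R).
    exact: enorm_continuous.
  apply: cont_of_der => r; apply: ex_derive.
Qed.
End I.


Theorem lemma2p3 (R : realType) (d : nat) (ell : R)
  (a : R -> 'rV[R]_d -> 'M[R]_d) (b : R -> 'rV[R]_d -> 'rV[R]_d)
  (nu : R -> 'rV[R]_d -> {measure set (Rd R d) -> \bar R})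
  (psi : R -> R) (y : 'rV[R]_d) :
  (1 <= d)%N ->
  0 < ell -> ell <= (Num.sqrt 2)^-1 ->
  (forall t x, (a t x)^T = a t x) ->
  (forall t x (v : 'rV[R]_d), 0 <= (v *m a t x *m v^T) 0 0) ->
  (forall t x, nu t x [set 0 : Rd R d] = 0%E) ->
  (forall t x, (gnu ell (nu t x) < +oo)%E) ->
  (forall t x, (nu t x [set z : Rd R d | (ell <= enorm z)%R] < +oo)%E) ->
  (forall r, derivable psi r 1) ->
  (forall r, derivable (derive1 psi) r 1) ->
  continuous (derive1 (derive1 psi)) ->
  (forall r, 0 <= r -> 0 <= psi r) ->
  psi x @[x --> +oo] --> +oo ->
  (forall r, 0 <= r -> 0 < (derive1 psi) r <= 1) ->
  (forall r, 0 <= r -> (derive1 (derive1 psi)) r <= 0) ->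
  forall t x, 0 <= t ->
  (levy_gen ell (a t x) (b t x) (nu t x)
     (fun x' => psi (ln (1 + enorm (x' - y) ^+ 2))) x
   <= 2%:E * (((\tr (a t x) + Num.max (dotp (x - y) (b t x)) 0)
                / (1 + enorm (x - y) ^+ 2))%:E
              + gnu ell (nu t x) * ((1 + enorm (x - y) ^+ 2)^-1)%:E
              + 2%:E * Hnu ell (nu t x) x y))%E.
Proof.
move=> d1pos ell0 ellle asym apsd nu0 gfin Hfin dpsi dpsi' cpsi'' psi0 psiinf hpsi' hpsi'' t x t0.
rewrite /levy_gen.
set A := a t x; set B := b t x; set mu := nu t x.
change (fun x' => psi (ln (1 + enorm (x' - y) ^+ 2))) with (V R d psi y).
rewrite (enorm_sq (x - y)).
set u := x - y.
have Qu0 := Q_ge0 u.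
set s := 1 + Q u.
have s0 : 0 < s by rewrite /s; lra.
set L := ln s.
have L0 : 0 <= L by apply: ln_ge0; rewrite /s; lra.
have [dp0 dp1] := andP (hpsi' L L0).
have dd := hpsi'' L L0.
set c := derive1 psi L / s * 2.
have hgrad : grad (V R d psi y) x = \row_i (c * u 0 i).
  apply/rowP => i; rewrite !mxE derive_V // dotp_e -/u -/s -/L /c; rewrite [u 0 i]mxE [(- y) 0 i]mxE; ring.
set C := (derive1 (derive1 psi) L - derive1 psi L) * (4 / s ^+ 2).
set Bc := derive1 psi L * (2 / s).
set K := \sum_i \sum_j A i j * (u 0 i * u 0 j).
have htr : \tr (A *m hess (V R d psi y) x) = C * K + Bc * \tr A.
  apply: trace_formula => i j.
  rewrite mxE derive_V2 // !dotp_e ebasisE /= -/u -/s -/L /C /Bc.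
  field; lra.
have K0 : 0 <= K by rewrite /K -quadE; exact: apsd.
have trA0 : 0 <= \tr A by apply: trace_ge0; exact: apsd.
have hdr : dotp B (grad (V R d psi y) x) = c * dotp u B.
  rewrite hgrad /dotp mulr_sumr; apply: eq_bigr => i _; rewrite mxE; ring.
rewrite htr hdr.
have sq2 : ell <= 1.
  apply: le_trans ellle _.
  have h2 : 1 <= Num.sqrt (2:R).
    rewrite -[X in X <= _]sqrtr1 ler_wsqrtr //; lra.
  have h3 : 0 < Num.sqrt (2:R) by lra.
  by rewrite invf_le1.
have pw : forall z : Rd R d,
  (psi (ln (1 + enorm (x + z - y) ^+ 2)) - psi L -
   (if enorm z <= ell then dotp z (grad (V R d psi y) x) else 0) <=
   \1_[set z : Rd R d | (enorm z < ell)%R] z * (2 / s * enorm z ^+ 2) +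
   \1_[set z : Rd R d | (ell <= enorm z)%R] z * (4 * ln (1 + enorm z / (1 + enorm u))))%R.
  move=> z.
  have e1 : x + z - y = u + z by rewrite /u addrAC.
  rewrite e1 enorm_sq.
  move: (@jump_real R d psi dpsi dpsi' hpsi' hpsi'' u z) => /= [J1 J2].
  rewrite -/s -/L in J1 J2.
  have dz : dotp z (grad (V R d psi y) x) = c * dotp u z.
    rewrite hgrad dotpC /dotp mulr_sumr; apply: eq_bigr => i _; rewrite mxE; ring.
  rewrite dz !indicE.
  have q0 := enorm_ge0 z.
  have Qz : Q z = enorm z ^+ 2 by rewrite enorm_sq.
  have Qzs : Q z / s <= 2 / s * enorm z ^+ 2.
    have e2 : 2 / s * enorm z ^+ 2 = 2 * (enorm z ^+ 2 / s) by ring.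
    have : 0 <= enorm z ^+ 2 / s by rewrite divr_ge0 ?sqr_ge0 //; lra.
    rewrite Qz e2; lra.
  have p0 := enorm_ge0 u.
  have Qus : s = 1 + enorm u ^+ 2 by rewrite /s enorm_sq.
  case: (ltrgtP (enorm z) ell) => hz.
  - rewrite (mem_set (hz : [set z : Rd R d | (enorm z < ell)%R] z)).
    rewrite (@memNset _ [set z : Rd R d | (ell <= enorm z)%R] z); last by move=> /= h; lra.
    rewrite /c /= mul1r mul0r addr0.
    lra.
  - rewrite (@memNset _ [set z : Rd R d | (enorm z < ell)%R] z); last by move=> /= h; lra.
    rewrite (@mem_set _ [set z : Rd R d | (ell <= enorm z)%R] z); last by rewrite /=; lra.
    rewrite /= mul0r mul1r add0r subr0.
    exact: J2.
  - rewrite (@memNset _ [set z : Rd R d | (enorm z < ell)%R] z); last by move=> /= h; lra.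
    rewrite (@mem_set _ [set z : Rd R d | (ell <= enorm z)%R] z); last by rewrite /=; lra.
    rewrite /= mul0r mul1r add0r.
    have eq_le_tmp : enorm z <= ell by rewrite hz.
    have := @small_sphere R (enorm u) (enorm z) p0 q0 (le_trans eq_le_tmp sq2).
    rewrite -Qus -Qz /c; lra.
have hI := @jump_integral R d mu ell s (enorm u) _ s0 (enorm_ge0 u) pw.
apply: le_trans (leeD2l _ hI) _.
have -> : (\int[mu]_(z in [set z : Rd R d | (ell <= enorm z)%R])
   (ln (1 + enorm z / (1 + enorm u)))%:E = Hnu ell mu x y)%E by [].
have gnu0 : (0 <= gnu ell mu)%E by apply: integral_ge0 => z _; rewrite lee_fin sqr_ge0.
have Hnu0 : (0 <= Hnu ell mu x y)%E.
  apply: integral_ge0 => z _; rewrite lee_fin ln_ge0 //.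
  have : 0 <= enorm z / (1 + enorm (x - y)) by rewrite divr_ge0 ?enorm_ge0 //; have := enorm_ge0 (x - y); lra.
  lra.
have gf := gfin t x; rewrite -/mu in gf.
set D := dotp u B; set M := Num.max D 0.
have DM : D <= M by rewrite /M le_max lexx.
have M0 : 0 <= M by rewrite /M le_max lexx orbT.
have CK : C * K <= 0.
  apply: mulr_le0_ge0 => //; apply: mulr_le0_ge0; first lra.
  by rewrite divr_ge0 // exprn_ge0 //; lra.
have hBc : Bc * \tr A <= 2 / s * \tr A.
  have e : Bc * \tr A = derive1 psi L * (2 / s * \tr A) by rewrite /Bc; ring.
  rewrite e ler_piMl // mulr_ge0 // divr_ge0 //; lra.
have hc : c * D <= 2 / s * M.
  have c0 : 0 <= c by rewrite /c mulr_ge0 // divr_ge0 //; lra.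
  apply: le_trans (_ : c * M <= _); first exact: ler_wpM2l.
  have e : c * M = derive1 psi L * (2 / s * M) by rewrite /c; ring.
  rewrite e ler_piMl // mulr_ge0 // divr_ge0 //; lra.
move: gnu0 gf; case: (gnu ell mu) => [g| |] //= g0 _.
move: Hnu0; case: (Hnu ell mu x y) => [h| |] //= h0.
  rewrite -!EFinM -!EFinD lee_fin.
  have e : 2 * ((\tr A + M) / s + g * s^-1 + 2 * h) = 2 / s * \tr A + 2 / s * M + 2 / s * g + 4 * h by ring.
  rewrite e; lra.
rewrite [(2%:E * +oo)%E]mulry gtr0_sg // mul1e addey; last by rewrite -EFinM -EFinD.
rewrite mulry gtr0_sg // mul1e mulry gtr0_sg // mul1e; exact: leey.
Qed.
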